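(* Consider the Com-IC model with GAPs in $\mathbf{Q}^+$ and fixed seed sets $S_\mathcal{A},S_\mathcal{B}$. Fix the live/blocked status of every edge, the thresholds $\alpha^v_\mathcal{A},\alpha^v_\mathcal{B}$ and the coins $\tau_v$ of every node. Then the final sets of $\mathcal{A}$-adopted and $\mathcal{B}$-adopted nodes are the same for every choice of the tie-breaking permutations $\pi_v$, $v\in V$; hence the tie-breaking rule does not affect the outcome in the mutual complementarity case.
   Context: Com-IC model. Let $G=(V,E,p)$ be a directed graph with $p:E\to[0,1]$ and $N^-(v)$ the in-neighbours of $v$. Two items $\mathcal{A},\mathcal{B}$; GAPs $\mathbf{Q}=(q_{\mathcal{A}|\emptyset},q_{\mathcal{A}|\mathcal{B}},q_{\mathcal{B}|\emptyset},q_{\mathcal{B}|\mathcal{A}})\in[0,1]^4$. Given seed sets $S_\mathcal{A},S_\mathcal{B}\subseteq V$, randomness: each edge $(u,v)$ independently live w.p. $p(u,v)$; each node $v$ independently draws $\alpha^v_\mathcal{A},\alpha^v_\mathcal{B}$ uniform on $[0,1]$, a uniformly random permutation $\pi_v$ of $N^-(v)$, and a fair coin $\tau_v\in\{\mathcal{A},\mathcal{B}\}$. For each item $X$ each node is $X$-idle, $X$-suspended, $X$-adopted or $X$-rejected; initially all idle. At step $0$ nodes of $S_\mathcal{A}$ become $\mathcal{A}$-adopted and nodes of $S_\mathcal{B}$ become $\mathcal{B}$-adopted (order for nodes in both given by $\tau_v$). At step $t\ge1$, $v$ is informed of $X$ by in-neighbour $u$ if $(u,v)$ is live and $u$ adopted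 $X$ at step $t-1$; informing in-neighbours are processed in order $\pi_v$ (an in-neighbour that adopted both items is processed for both, in its adoption order). When $v$ is informed of $X$ ($Y$ the other item) while $X$-idle: if $Y$-adopted, $v$ becomes $X$-adopted if $\alpha^v_X\le q_{X|Y}$, else $X$-rejected; otherwise $X$-adopted if $\alpha^v_X\le q_{X|\emptyset}$, else $X$-suspended. Informing a non-$X$-idle node of $X$ has no effect. Reconsideration: when an $X$-suspended node becomes $Y$-adopted, it becomes $X$-adopted if $\alpha^v_X\le q_{X|Y}$, else $X$-rejected. The process stops when nothing changes. $\mathbf{Q}^+$: $q_{\mathcal{A}|\emptyset}\le q_{\mathcal{A}|\mathcal{B}}$ and $q_{\mathcal{B}|\emptyset}\le q_{\mathcal{B}|\mathcal{A}}$. *)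

(* Defs.v *)
From HB Require Import structures.
From mathcomp Require Import all_boot all_order all_algebra.
Set Implicit Arguments. Unset Strict Implicit. Unset Printing Implicit Defensive.
Import Order.TTheory GRing.Theory Num.Theory.
Local Open Scope ring_scope.

Inductive item := IA | IB.

Definition other (X : item) : item := match X with IA => IB | IB => IA end.

Definition item_eqb (X Y : item) : bool :=
  match X, Y with IA, IA | IB, IB => true | _, _ => false end.

Inductive status := Idle | Suspended | Adopted | Rejected.

Definition is_adopted (s : status) : bool :=
  match s with Adopted => true | _ => false end.

Record gaps (R : realFieldType) := Gaps {
  qA0 : R; qAB : R; qB0 : R; qBA : R }.

Definition qcond (R : realFieldType) (Q : gaps R) (X : item) (givenOther : bool) : R :=
  match X, givenOther with
  | IA, false => qA0 Q | IA, true => qAB Q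
  | IB, false => qB0 Q | IB, true => qBA Q end.

Definition gaps_valid (R : realFieldType) (Q : gaps R) : Prop :=
  [/\ 0 <= qA0 Q <= 1, 0 <= qAB Q <= 1, 0 <= qB0 Q <= 1 & 0 <= qBA Q <= 1].

Definition Qplus (R : realFieldType) (Q : gaps R) : Prop :=
  qA0 Q <= qAB Q /\ qB0 Q <= qBA Q.

Definition set_status (f : item -> status) (X : item) (s : status) : item -> status :=
  fun Y => if item_eqb Y X then s else f Y.

(* Local state of a node during a step: its statuses and the list (in order)
   of items it has adopted during the current step. *)
Definition lstate := ((item -> status) * seq item)%type.

Definition inform (R : realFieldType) (Q : gaps R) (alpha_v : item -> R)
    (ls : lstate) (X : item) : lstate :=
  let (f, nw) := ls in
  let Y := other X in
  match f X with
  | Idle =>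
    match f Y with
    | Adopted =>
        if alpha_v X <= qcond Q X true
        then (set_status f X Adopted, nw ++ [:: X])
        else (set_status f X Rejected, nw)
    | _ =>
        if alpha_v X <= qcond Q X false then
          let f1 := set_status f X Adopted in
          match f Y with
          | Suspended =>  (* reconsideration of Y *)
              if alpha_v Y <= qcond Q Y true
              then (set_status f1 Y Adopted, nw ++ [:: X; Y])
              else (set_status f1 Y Rejected, nw ++ [:: X])
          | _ => (f1, nw ++ [:: X])
          end
        else (set_status f X Suspended, nw)
    end
  | _ => ls
  end.

(* Global state: statuses, and for every node the ordered list of items it
   adopted at the last step. *)
Record cstate (V : finType) := CState {
  st : V -> item -> status;
  newad : V -> seq item }.

Definition seed (V : finType) (SA SB : {set V}) (X : item) : {set V} :=
  match X with IA => SA | IB => SB end.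

(* Step 0: seeding; for nodes in both seed sets the order is given by tau. *)
Definition init (V : finType) (SA SB : {set V}) (tau : V -> item) : cstate V :=
  CState (fun v X => if v \in seed SA SB X then Adopted else Idle)
         (fun v => [seq X <- [:: tau v; other (tau v)] | v \in seed SA SB X]).

(* Step t >= 1: every node v processes, in the order pi v of its in-neighbours,
   the informing events from live in-edges whose tail adopted items at t-1
   (both items, in the tail's adoption order). *)
Definition step (R : realFieldType) (V : finType) (live : rel V) (pi : V -> seq V)
    (Q : gaps R) (alpha : V -> item -> R) (s : cstate V) : cstate V :=
  let res v := foldl (inform Q (alpha v)) (st s v, [::])
                 (flatten [seq if live u v then newad s u else [::] | u <- pi v]) in
  CState (fun v => (res v).1) (fun v => (res v).2).

Definition run (R : realFieldType) (V : finType) (live : rel V) (pi : V -> seq V)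
    (Q : gaps R) (alpha : V -> item -> R) (SA SB : {set V}) (tau : V -> item)
    (n : nat) : cstate V :=
  iter n (step live pi Q alpha) (init SA SB tau).

Definition stopped (R : realFieldType) (V : finType) (live : rel V) (pi : V -> seq V)
    (Q : gaps R) (alpha : V -> item -> R) (s : cstate V) : Prop :=
  forall v, (forall X, st (step live pi Q alpha s) v X = st s v X) /\
            newad (step live pi Q alpha s) v = newad s v.

Definition adopted_set (V : finType) (s : cstate V) (X : item) : {set V} :=
  [set v | is_adopted (st s v X)].

Definition tiebreak_ok (V : finType) (E : rel V) (pi : V -> seq V) : Prop :=
  forall v, perm_eq (pi v) (enum [pred u | E u v]).

(* Main.v *)
Require Import Defs.
From HB Require Import structures.
From mathcomp Require Import all_boot all_order all_algebra.
From Stdlib Require List.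
Set Implicit Arguments. Unset Strict Implicit. Unset Printing Implicit Defensive.
Import Order.TTheory GRing.Theory Num.Theory.
Local Open Scope ring_scope.

Ltac crush :=
  rewrite /inform /set_status /=;
  repeat match goal with
  | |- context[match ?f ?Z with _ => _ end] => let E := fresh "E" in case E: (f Z) => //=
  | |- context[if ?c then _ else _] => let E := fresh "E" in case E: c => //=
  end.

Section Inform.
Variables (R : realFieldType) (Q : gaps R) (a : item -> R).


Lemma inform_adopted (ls : lstate) X Z :
  ls.1 Z = Adopted -> (inform Q a ls X).1 Z = Adopted.
Proof. case: ls => f nw /=; case: X; case: Z => H; crush; congruence. Qed.

Lemma inform_nonidle (ls : lstate) X Z :
  ls.1 Z <> Idle -> (inform Q a ls X).1 Z <> Idle.
Proof. case: ls => f nw /=; case: X; case: Z => H; crush; congruence. Qed.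

Lemma inform_self (ls : lstate) X :
  (inform Q a ls X).1 X <> Idle.
Proof. case: ls => f nw /=; case: X; crush; congruence. Qed.

Lemma inform_nw (ls : lstate) X Z :
  (forall Z, List.In Z ls.2 -> ls.1 Z = Adopted) ->
  List.In Z (inform Q a ls X).2 -> (inform Q a ls X).1 Z = Adopted.
Proof.
case: ls => f nw /= H.
have HA := H IA; have HB := H IB.
case: X; case: Z; crush; rewrite ?List.in_app_iff /=; intuition (try congruence; auto).
Qed.

Lemma inform_nw2 (ls : lstate) X Z :
  (inform Q a ls X).1 Z = Adopted -> ls.1 Z = Adopted \/ List.In Z (inform Q a ls X).2.
Proof.
case: ls => f nw /=.
case: X; case: Z; crush; rewrite ?List.in_app_iff /=; intuition (try congruence; auto).
Qed.

Definition linv (f : item -> status) := forall Z,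
  (f Z = Rejected -> qcond Q Z true < a Z) /\
  (f Z = Suspended -> qcond Q Z false < a Z) /\
  (f Z = Suspended -> f (other Z) <> Adopted).

Lemma inform_linv (ls : lstate) X : linv ls.1 -> linv (inform Q a ls X).1.
Proof.
case: ls => f nw /= H.
have [HA1 [HA2 HA3]] := H IA; have [HB1 [HB2 HB3]] := H IB.
rewrite /qcond /= in HA1 HA2 HB1 HB2.
case: X; move=> Z; case: Z; crush; rewrite /qcond /=;
 intuition (try congruence; auto; try (rewrite ltNge; match goal with H : (?x <= ?y) = false |- context[?x <= ?y] => by rewrite H end)).
Qed.

Lemma inform_pinv (pA pI : item -> Prop) (ls : lstate) X :
  (forall Z, pI Z -> (a Z <= qcond Q Z false \/ (a Z <= qcond Q Z true /\ pA (other Z))) -> pA Z) ->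
  pI X ->
  (forall Z, (ls.1 Z = Adopted -> pA Z) /\ (ls.1 Z <> Idle -> pI Z)) ->
  (forall Z, ((inform Q a ls X).1 Z = Adopted -> pA Z) /\ ((inform Q a ls X).1 Z <> Idle -> pI Z)).
Proof.
case: ls => f nw /= Hcl HX H.
have [HA1 HA2] := H IA; have [HB1 HB2] := H IB.
have CA := Hcl IA; have CB := Hcl IB; rewrite /qcond /= in CA CB.
case: X HX => HX Z; case: Z; crush; rewrite ?/qcond /=; intuition (try congruence; auto).
all: try (apply: CA; [by auto| by (left; done) || (right; split; [done| apply: CB; [by auto|by left]])]).
all: try (apply: CB; [by auto| by (left; done) || (right; split; [done| apply: CA; [by auto|by left]])]).
Qed.
End Inform.

Section Fold.
Variables (R : realFieldType) (Q : gaps R) (a : item -> R).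
Notation fold := (foldl (inform Q a)).

Lemma fold_adopted l (ls : lstate) Z : ls.1 Z = Adopted -> (fold ls l).1 Z = Adopted.
Proof. elim: l ls => //= x l IH ls H; apply: IH; exact: inform_adopted. Qed.

Lemma fold_nonidle l (ls : lstate) Z : ls.1 Z <> Idle -> (fold ls l).1 Z <> Idle.
Proof. elim: l ls => //= x l IH ls H; apply: IH; exact: inform_nonidle. Qed.

Lemma fold_in l (ls : lstate) X : List.In X l -> (fold ls l).1 X <> Idle.
Proof.
elim: l ls => //= x l IH ls [->|H]; last exact: IH.
apply: fold_nonidle; exact: inform_self.
Qed.

Lemma fold_nw l (ls : lstate) :
  (forall Z, List.In Z ls.2 -> ls.1 Z = Adopted) ->
  forall Z, List.In Z (fold ls l).2 -> (fold ls l).1 Z = Adopted.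
Proof.
elim: l ls => //= x l IH ls H; apply: IH => Z; exact: inform_nw.
Qed.

Lemma inform_grow (ls : lstate) X Z : List.In Z ls.2 -> List.In Z (inform Q a ls X).2.
Proof.
case: ls => f nw /= H; case: X; crush; rewrite ?List.in_app_iff; auto.
Qed.

Lemma fold_grow l (ls : lstate) Z : List.In Z ls.2 -> List.In Z (fold ls l).2.
Proof. elim: l ls => //= x l IH ls H; apply: IH; exact: inform_grow. Qed.

Lemma fold_nw2 l (ls : lstate) Z :
  (fold ls l).1 Z = Adopted -> ls.1 Z = Adopted \/ List.In Z (fold ls l).2.
Proof.
elim: l ls => [|x l IH] ls H /=; first by left.
case: (IH _ H) => [H1|H1]; last by right.
case: (inform_nw2 H1) => [H2|H2]; first by left.
right; exact: fold_grow.
Qed.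

Lemma inform_new (ls : lstate) X Z :
  List.In Z (inform Q a ls X).2 -> List.In Z ls.2 \/ ls.1 Z <> Adopted.
Proof.
case: ls => f nw /=; case: X; case: Z; crush; rewrite ?List.in_app_iff /=;
  intuition (try congruence; auto).
Qed.

Lemma fold_new l (f0 : item -> status) (ls : lstate) :
  (forall Z, List.In Z ls.2 -> f0 Z <> Adopted) ->
  (forall Z, f0 Z = Adopted -> ls.1 Z = Adopted) ->
  forall Z, List.In Z (fold ls l).2 -> f0 Z <> Adopted.
Proof.
elim: l ls => //= x l IH ls H1 H2; apply: IH.
  move=> Z /inform_new [/H1 //|HZ E]; apply: HZ; exact: H2.
move=> Z /H2; exact: inform_adopted.
Qed.

Lemma fold_linv l (ls : lstate) : linv Q a ls.1 -> linv Q a (fold ls l).1.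
Proof. elim: l ls => //= x l IH ls H; apply: IH; exact: inform_linv. Qed.

Lemma fold_pinv (pA pI : item -> Prop) l (ls : lstate) :
  (forall Z, pI Z -> (a Z <= qcond Q Z false \/ (a Z <= qcond Q Z true /\ pA (other Z))) -> pA Z) ->
  (forall X, List.In X l -> pI X) ->
  (forall Z, (ls.1 Z = Adopted -> pA Z) /\ (ls.1 Z <> Idle -> pI Z)) ->
  (forall Z, ((fold ls l).1 Z = Adopted -> pA Z) /\ ((fold ls l).1 Z <> Idle -> pI Z)).
Proof.
move=> Hcl; elim: l ls => //= x l IH ls Hl H; apply: IH; first by auto.
apply: inform_pinv => //; auto.
Qed.
End Fold.

Section Run.
Variables (R : realFieldType) (V : finType) (live : rel V) (pi : V -> seq V)
  (Q : gaps R) (alpha : V -> item -> R) (SA SB : {set V}) (tau : V -> item).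

Notation s t := (run live pi Q alpha SA SB tau t).
Notation lst s v := (flatten [seq if live u v then newad s u else [::] | u <- pi v]).

Lemma runS t : s t.+1 = step live pi Q alpha (s t).
Proof. by rewrite /run iterS. Qed.

Lemma in_lst (c : cstate V) v X :
  List.In X (lst c v) -> exists u, [/\ u \in pi v, live u v & List.In X (newad c u)].
Proof.
elim: (pi v) => //= u l IH; rewrite List.in_app_iff => -[H|/IH [w [H1 H2 H3]]].
  by exists u; case: (live u v) H => //= H; rewrite inE eqxx.
by exists w; rewrite inE H1 orbT.
Qed.

Lemma lst_in (c : cstate V) v u X :
  u \in pi v -> live u v -> List.In X (newad c u) -> List.In X (lst c v).
Proof.
elim: (pi v) => //= w l IH; rewrite inE List.in_app_iff => /orP[/eqP<-|H] Hl HX.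
  by left; rewrite Hl.
by right; apply: IH.
Qed.

Lemma init_st v X :
  st (init SA SB tau) v X = Adopted \/ st (init SA SB tau) v X = Idle.
Proof. rewrite /=; case: ifP; auto. Qed.

Lemma G1 t v Z : List.In Z (newad (s t) v) -> st (s t) v Z = Adopted.
Proof.
elim: t v Z => [|t IH] v Z.
  rewrite /run /= => H.
  suff: v \in seed SA SB Z by move=> ->.
  move: H; case: (tau v) => /=; case: ifP => /=; case: ifP => /=; case: Z;
    intuition (try congruence).
rewrite runS /step /= => H.
apply: fold_nw H => Y //.
Qed.

Lemma G2 t v : linv Q (alpha v) (st (s t) v).
Proof.
elim: t v => [|t IH] v.
  move=> Z; case: (init_st v Z) => /= ->; split=> //; split=> //.
rewrite runS /step /=; apply: (@fold_linv _ _ _ _ (st (s t) v, [::])); exact: IH.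
Qed.

Lemma mono_adopted t k v Z : st (s t) v Z = Adopted -> st (s (k + t)) v Z = Adopted.
Proof.
elim: k => // k IH H; rewrite addSn runS /step /=.
apply: (@fold_adopted _ _ _ _ (st (s (k + t)) v, [::])); exact: IH.
Qed.

Lemma mono_nonidle t k v Z : st (s t) v Z <> Idle -> st (s (k + t)) v Z <> Idle.
Proof.
elim: k => // k IH H; rewrite addSn runS /step /=.
apply: (@fold_nonidle _ _ _ _ (st (s (k + t)) v, [::])); exact: IH.
Qed.

Lemma G3 t v Z : st (s t) v Z = Adopted -> exists t', (t' <= t)%N /\ List.In Z (newad (s t') v).
Proof.
elim: t => [|t IH] H.
  exists 0%N; split=> //; move: H; rewrite /run /= /seed.
  case: ifP => // Hin _; case: (tau v); case: Z Hin => /= ->; case: ifP => /=; auto.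
move: H; rewrite runS /step /= => /fold_nw2 [H|H].
  by case: (IH H) => t' [Ht' Hi]; exists t'; split=> //; exact: leqW.
by exists t.+1; split=> //; rewrite runS.
Qed.

Lemma stopped_nil t v : stopped live pi Q alpha (s t) -> newad (s t) v = [::].
Proof.
move=> Hs; case E: (newad (s t) v) => [//|Z l].
have HZ : List.In Z (newad (s t) v) by rewrite E; left.
have H1 := G1 HZ.
have [_ Hn] := Hs v; rewrite -Hn /step /= in HZ.
by case: (@fold_new _ _ _ _ (st (s t) v) (st (s t) v, [::]) (fun _ (x : List.In _ [::]) => match x with end) (fun _ h => h) Z HZ).
Qed.

Lemma thmA (P : item -> V -> Prop) :
  (forall v X, v \in seed SA SB X -> P X v) ->
  (forall v X, (exists u, live u v /\ P X u) ->
     (alpha v X <= qcond Q X false \/ (alpha v X <= qcond Q X true /\ P (other X) v)) -> P X v) ->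
  forall t v Z, (st (s t) v Z = Adopted -> P Z v) /\
     (st (s t) v Z <> Idle -> v \in seed SA SB Z \/ exists u, live u v /\ P Z u).
Proof.
move=> Hs Hi t; elim: t => [|t IH] v Z.
  rewrite /run /=; case: ifP => H; split=> // _; [exact: Hs | by left].
rewrite runS /step /=.
apply: (@fold_pinv _ _ _ (fun Z => P Z v) (fun Z => v \in seed SA SB Z \/ exists u, live u v /\ P Z u)).
- move=> Y [HY|HY] Hc; [exact: Hs | exact: Hi].
- move=> X /in_lst [u [Hu Hl HX]]; right; exists u; split=> //; apply: (proj1 (IH u X)); exact: G1.
- move=> Y; exact: IH.
Qed.

Lemma thmB (E : rel V) n : Qplus Q -> (forall u v, live u v -> E u v) -> tiebreak_ok E pi ->
  stopped live pi Q alpha (s n) ->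
  (forall v X, v \in seed SA SB X -> st (s n) v X = Adopted) /\
  (forall v X, (exists u, live u v /\ st (s n) u X = Adopted) ->
     (alpha v X <= qcond Q X false \/ (alpha v X <= qcond Q X true /\ st (s n) v (other X) = Adopted)) ->
     st (s n) v X = Adopted).
Proof.
move=> [HqA HqB] HE Ht Hst; split.
  move=> v X H; rewrite -(addn0 n); apply: mono_adopted; by rewrite /run /= H.
move=> v X [u [Hl Hu]] Hc.
have [t' [Ht' HX]] := G3 Hu.
have Hlt : (t' < n)%N.
  rewrite ltn_neqAle Ht' andbT; apply/eqP => E'; move: HX; by rewrite E' stopped_nil.
have Hni : st (s t'.+1) v X <> Idle.
  rewrite runS /step /=; apply: fold_in; apply: lst_in HX => //.
  by rewrite (perm_mem (Ht v)) mem_enum inE HE.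
have := mono_nonidle (k := (n - t'.+1)%N) Hni; rewrite subnK //.
have [H1 [H2 H3]] := G2 n v X.
have qle : qcond Q X false <= qcond Q X true by case: X {H1 H2 H3 Hc HX Hu Hni}.
case: (st (s n) v X) H1 H2 H3 => // H1 H2 H3 _.
- have H2' := H2 erefl; case: Hc => [Hc|[Hc Ha]].
    by rewrite ltNge Hc in H2'.
  by case: (H3 erefl).
- have H1' := H1 erefl; case: Hc => [Hc|[Hc Ha]].
    by rewrite ltNge (le_trans Hc qle) in H1'.
  by rewrite ltNge Hc in H1'.
Qed.
End Run.

Theorem lemma2 (R : realFieldType) (V : finType) (E live : rel V) (Q : gaps R)
    (SA SB : {set V}) (alpha : V -> item -> R) (tau : V -> item)
    (pi1 pi2 : V -> seq V) :
  gaps_valid Q -> Qplus Q ->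
  (forall u v, live u v -> E u v) ->
  (forall v X, 0 <= alpha v X <= 1) ->
  tiebreak_ok E pi1 -> tiebreak_ok E pi2 ->
  forall n1 n2 : nat,
    stopped live pi1 Q alpha (run live pi1 Q alpha SA SB tau n1) ->
    stopped live pi2 Q alpha (run live pi2 Q alpha SA SB tau n2) ->
    forall X : item,
      adopted_set (run live pi1 Q alpha SA SB tau n1) X =
      adopted_set (run live pi2 Q alpha SA SB tau n2) X.
Proof.
move=> _ HQ HE _ T1 T2 n1 n2 S1 S2 X.
have [B1s B1i] := @thmB R V live pi1 Q alpha SA SB tau E n1 HQ HE T1 S1.
have [B2s B2i] := @thmB R V live pi2 Q alpha SA SB tau E n2 HQ HE T2 S2.
have A12 := @thmA R V live pi1 Q alpha SA SB tau
  (fun X v => st (run live pi2 Q alpha SA SB tau n2) v X = Adopted) B2s B2i n1.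
have A21 := @thmA R V live pi2 Q alpha SA SB tau
  (fun X v => st (run live pi1 Q alpha SA SB tau n1) v X = Adopted) B1s B1i n2.
apply/setP => v; rewrite !inE.
have isA : forall x, is_adopted x -> x = Adopted by case.
apply/idP/idP => /isA H.
  by rewrite (proj1 (A12 v X) H).
by rewrite (proj1 (A21 v X) H).
Qed.
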